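(* Assume $n_1,n_2\in(0,4)$ and (IE). Then for all $\varepsilon\in(0,1)$ and all $t\in(0,T_{max,\varepsilon})$, $$\frac{d}{dt}\int_\Omega u_\varepsilon\le\Big(\lambda_1+\frac{\sqrt\varepsilon}{2\sqrt3}\Big)\int_\Omega u_\varepsilon-\int_\Omega u_\varepsilon^2+a_1\int_\Omega u_\varepsilon v_\varepsilon$$ and $$\frac{d}{dt}\int_\Omega v_\varepsilon\le\Big(\lambda_2+\frac{\sqrt\varepsilon}{2\sqrt3}\Big)\int_\Omega v_\varepsilon-\int_\Omega v_\varepsilon^2-a_2\int_\Omega u_\varepsilon v_\varepsilon+\frac{a_2\sqrt\varepsilon}{2\sqrt3}\int_\Omega u_\varepsilon.$$
   Context: Let $\Omega\subset\mathbb{R}$ be a bounded open interval, $D_i,a_i,\lambda_i,\chi_i>0$ ($i=1,2$), and fix $\alpha\in(0,\frac12]$. Assumption (IE): $u_0,v_0\in W^{1,2}(\Omega)$ with $u_0>0,v_0>0$ in $\overline\Omega$; for each $\varepsilon\in(0,1)$, $u_{0\varepsilon},v_{0\varepsilon}\in C^5(\overline\Omega)$ with $u_{0\varepsilon x}=u_{0\varepsilon xxx}=v_{0\varepsilon x}=v_{0\varepsilon xxx}=0$ on $\partial\Omega$; $\frac12\inf_\Omega u_0\le u_{0\varepsilon}\le u_0+1$, $\frac12\inf_\Omega v_0\le v_{0\varepsilon}\le v_0+1$ in $\Omega$; $\int_\Omega u_{0\varepsilon x}^2\le\int_\Omega u_{0x}^2+1$, $\int_\Omega v_{0\varepsilon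 x}^2\le\int_\Omega v_{0x}^2+1$; $u_{0\varepsilon}\to u_0$, $v_{0\varepsilon}\to v_0$ a.e. as $\varepsilon\searrow0$. Approximating problem: $u_t=-\varepsilon\big(\frac{u^4}{u^{4-n_1}+\varepsilon}u_{xxx}\big)_x+\varepsilon^{\alpha/2}(u^{-\alpha}u_x)_x+D_1u_{xx}-\chi_1\big(\frac{u^{5-n_1}}{u^{4-n_1}+\varepsilon}v_x\big)_x+\frac{3u^3}{3u^2+\varepsilon}(\lambda_1-u+a_1v)$, $v_t=-\varepsilon\big(\frac{v^4}{v^{4-n_2}+\varepsilon}v_{xxx}\big)_x+\varepsilon^{\alpha/2}(v^{-\alpha}v_x)_x+D_2v_{xx}+\chi_2\big(\frac{v^{5-n_2}}{v^{4-n_2}+\varepsilon}u_x\big)_x+\frac{3v^3}{3v^2+\varepsilon}(\lambda_2-v-a_2u)$ in $\Omega\times(0,\infty)$, $u_x=v_x=u_{xxx}=v_{xxx}=0$ on $\partial\Omega$, $u(\cdot,0)=u_{0\varepsilon}$, $v(\cdot,0)=v_{0\varepsilon}$. For $n_i\in(0,4)$ and each $\varepsilon$ it has a classical solution $(u_\varepsilon,v_\varepsilon)$, positive in $\overline\Omega\times[0,T_{max,\varepsilon})$, belonging to $\bigcap_{s\in(3/2,2)}C^0([0,T_{max,\varepsilon});W^{s,2}(\Omega))\cap C^{4,1}(\overline\Omega\times(0,T_{max,\varepsilon}))$, where $T_{max,\varepsilon}\in(0,\infty]$ is maximal: either $T_{max,\varepsilon}=\infty$ or $\limsup_{t\nearrow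 T_{max,\varepsilon}}\{\|u_\varepsilon(\cdot,t)\|_{W^{2,2}}+\|1/u_\varepsilon(\cdot,t)\|_{L^\infty}+\|v_\varepsilon(\cdot,t)\|_{W^{2,2}}+\|1/v_\varepsilon(\cdot,t)\|_{L^\infty}\}=\infty$. *)

(* Defs.v *)
From Stdlib Require Import Reals.
From Coquelicot Require Import Coquelicot.
Open Scope R_scope.

(* Omega = (a,b); the cylinder  closure(Omega) x (0,T), T in (0, +oo]. *)
Definition cyl (a b : R) (T : Rbar) (x t : R) : Prop :=
  a <= x <= b /\ 0 < t /\ Rbar_lt (Finite t) T.

Definition cont_on_cyl (a b : R) (T : Rbar) (f : R -> R -> R) : Prop :=
  forall x t, cyl a b T x t ->
    filterlim (fun p : R * R => f (fst p) (snd p))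
      (within (fun p : R * R => cyl a b T (fst p) (snd p)) (locally (x, t)))
      (locally (f x t)).

(* u belongs to C^{4,1}(closure(Omega) x (0,T)), with u1..u4 = d^k u / dx^k and
   ut = du/dt : the derivatives exist in Omega x (0,T) and, together with u,
   extend continuously to closure(Omega) x (0,T). *)
Definition C41 (a b : R) (T : Rbar) (u u1 u2 u3 u4 ut : R -> R -> R) : Prop :=
  (forall x t, a < x < b -> 0 < t -> Rbar_lt (Finite t) T ->
      is_derive (fun y => u y t) x (u1 x t) /\
      is_derive (fun y => u1 y t) x (u2 x t) /\
      is_derive (fun y => u2 y t) x (u3 x t) /\
      is_derive (fun y => u3 y t) x (u4 x t) /\
      is_derive (fun s => u x s) t (ut x t)) /\
  cont_on_cyl a b T u /\ cont_on_cyl a b T u1 /\ cont_on_cyl a b T u2 /\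
  cont_on_cyl a b T u3 /\ cont_on_cyl a b T u4 /\ cont_on_cyl a b T ut.

(* Right-hand side of the approximate equation for the component w, coupled with
   the other component z (zx = z_x), at the point (x,t):
   -eps (w^4/(w^(4-n)+eps) w_xxx)_x + eps^(alpha/2) (w^(-alpha) w_x)_x + D w_xx
   + sgn*chi (w^(5-n)/(w^(4-n)+eps) z_x)_x + 3w^3/(3w^2+eps) * kin(w,z). *)
Definition rhs (eps alpha n D chi sgn : R) (w w1 w2 w3 zx : R -> R -> R)
    (kin : R -> R) (x t : R) : R :=
  - eps * Derive (fun y => w y t ^ 4 / (Rpower (w y t) (4 - n) + eps) * w3 y t) x
  + Rpower eps (alpha / 2) * Derive (fun y => Rpower (w y t) (- alpha) * w1 y t) x
  + D * w2 x t
  + sgn * chi * Derive (fun y => Rpower (w y t) (5 - n) / (Rpower (w y t) (4 - n) + eps) * zx y t) x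
  + 3 * w x t ^ 3 / (3 * w x t ^ 2 + eps) * kin x.

(* Main.v *)
Require Import Defs.
From Stdlib Require Import Reals Lra Psatz.
From Coquelicot Require Import Coquelicot.
Open Scope R_scope.

Lemma cplus (f g : R -> R) x : continuous f x -> continuous g x -> continuous (fun y => f y + g y) x.
Proof. intros; apply (continuous_plus f g); auto. Qed.
Lemma cmult (f g : R -> R) x : continuous f x -> continuous g x -> continuous (fun y => f y * g y) x.
Proof. intros; apply (continuous_mult f g); auto. Qed.
Lemma cminus (f g : R -> R) x : continuous f x -> continuous g x -> continuous (fun y => f y - g y) x.
Proof. intros; apply (continuous_minus f g); auto. Qed.
Lemma cconst (c : R) x : continuous (fun _ : R => c) x.
Proof. apply continuous_const. Qed.
Lemma cdiv (f g : R -> R) x : continuous f x -> continuous g x -> g x <> 0 -> continuous (fun y => f y / g y) x.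
Proof. intros. apply cmult; auto. apply continuous_Rinv_comp; auto. Qed.
Lemma cpow (f : R -> R) n x : continuous f x -> continuous (fun y => f y ^ n) x.
Proof. intros H; induction n; simpl. apply cconst. apply cmult; auto. Qed.
Lemma crpow (f : R -> R) p x : continuous f x -> 0 < f x -> continuous (fun y => Rpower (f y) p) x.
Proof. intros H Hp. unfold Rpower. apply continuous_exp_comp. apply cmult. apply cconst.
  apply (continuous_comp f ln). auto. apply continuous_ln; auto. Qed.
Lemma exd_rpow (f : R -> R) p x : ex_derive f x -> 0 < f x -> ex_derive (fun y => Rpower (f y) p) x.
Proof. intros H Hp. apply (ex_derive_comp (fun z => Rpower z p) f); auto.
  exists (p * Rpower (f x) (p - 1)). apply is_derive_Reals. apply derivable_pt_lim_power; auto. Qed.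
Lemma dplus (f g : R -> R) x df dg : is_derive f x df -> is_derive g x dg -> is_derive (fun y => f y + g y) x (df + dg).
Proof. intros; apply (is_derive_plus f g); auto. Qed.
Lemma exdplus (f g : R -> R) x : ex_derive f x -> ex_derive g x -> ex_derive (fun y => f y + g y) x.
Proof. intros; apply (ex_derive_plus f g); auto. Qed.

Lemma pair_cont {U : UniformSpace} (phi1 phi2 : U -> R) p0 :
  continuous phi1 p0 -> continuous phi2 p0 ->
  filterlim (fun p => (phi1 p, phi2 p)) (locally p0) (locally (phi1 p0, phi2 p0)).
Proof.
  intros H1 H2 P [eps HP].
  assert (A1 := H1 _ (locally_ball (phi1 p0) eps)).
  assert (A2 := H2 _ (locally_ball (phi2 p0) eps)).
  unfold filtermap in *.
  generalize (filter_and _ _ A1 A2). apply filter_imp. intros p [B1 B2].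
  apply HP. split; assumption.
Qed.

Lemma cyl_comp {U : UniformSpace} a b T f (phi1 phi2 : U -> R) p0 :
  cont_on_cyl a b T f -> cyl a b T (phi1 p0) (phi2 p0) ->
  continuous phi1 p0 -> continuous phi2 p0 ->
  locally p0 (fun p => cyl a b T (phi1 p) (phi2 p)) ->
  continuous (fun p => f (phi1 p) (phi2 p)) p0.
Proof.
  intros Hf Hc H1 H2 Hl.
  unfold continuous.
  apply (filterlim_comp _ _ _ (fun p => (phi1 p, phi2 p)) (fun q : R * R => f (fst q) (snd q))
    (locally p0) (within (fun q : R * R => cyl a b T (fst q) (snd q)) (locally (phi1 p0, phi2 p0)))).
  2: apply Hf; exact Hc.
  intros P HP. unfold within in HP.
  assert (A := pair_cont phi1 phi2 p0 H1 H2 _ HP). unfold filtermap in *.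
  generalize (filter_and _ _ A Hl). apply filter_imp. simpl. tauto.
Qed.

Lemma loc_of (x:R) (P : R -> Prop) (d:posreal): (forall y, Rabs(y-x)<d -> P y) -> locally x P.
Proof. intros H; exists d; intros y Hy; apply H; exact Hy. Qed.

Definition clamp a b x := Rmax a (Rmin b x).
Lemma clamp_in a b x : a <= b -> a <= clamp a b x <= b.
Proof. intros; unfold clamp, Rmax, Rmin; repeat destruct Rle_dec; lra. Qed.
Lemma clamp_id a b x : a <= x <= b -> clamp a b x = x.
Proof. intros; unfold clamp, Rmax, Rmin; repeat destruct Rle_dec; lra. Qed.
Lemma clamp_lip a b x y : a <= b -> Rabs (clamp a b y - clamp a b x) <= Rabs (y - x).
Proof. intros; unfold clamp, Rmax, Rmin; repeat destruct Rle_dec; unfold Rabs; repeat destruct Rcase_abs; lra. Qed.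
Lemma clamp_cont a b x : a <= b -> continuous (clamp a b) x.
Proof. intros Hab P [e HP]. exists e. intros y Hy. apply HP.
  change (Rabs (clamp a b y - clamp a b x) < e). eapply Rle_lt_trans. apply clamp_lip; auto. exact Hy. Qed.

Lemma tnbhd (T : Rbar) t : 0 < t -> Rbar_lt t T -> exists d : posreal, forall s, Rabs (s - t) < d -> 0 < s /\ Rbar_lt s T.
Proof.
  intros H0 HT. destruct T as [T'| |]; simpl in HT.
  - assert (0 < Rmin t (T' - t)) by (apply Rmin_pos; lra).
    exists (mkposreal _ H). simpl. intros s Hs. apply Rabs_def2 in Hs.
    generalize (Rmin_l t (T'-t)) (Rmin_r t (T'-t)); simpl; intros; lra.
  - exists (mkposreal _ H0). simpl. intros s Hs. apply Rabs_def2 in Hs. simpl; split; auto; lra.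
  - contradiction.
Qed.

Lemma cont_x a b T f t : cont_on_cyl a b T f -> a <= b -> 0 < t -> Rbar_lt t T ->
  forall x, continuous (fun y => f (clamp a b y) t) x.
Proof.
  intros Hf Hab H0 HT x.
  apply (cyl_comp a b T f (clamp a b) (fun _ => t) x Hf).
  - split; [apply clamp_in; auto | auto].
  - apply clamp_cont; auto.
  - apply cconst.
  - apply filter_forall. intros y. split; [apply clamp_in; auto | auto].
Qed.

Lemma cont_t a b T f x s : cont_on_cyl a b T f -> a <= x <= b -> 0 < s -> Rbar_lt s T ->
  continuous (fun s => f x s) s.
Proof.
  intros Hf Hx H0 HT.
  apply (cyl_comp a b T f (fun _ => x) (fun s => s) s Hf).
  - split; auto.
  - apply cconst.
  - apply continuous_id.
  - destruct (tnbhd T s H0 HT) as [d Hd]. apply (loc_of s _ d). intros y Hy.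
    split; auto.
Qed.

Lemma cont_2d a b T f x t : cont_on_cyl a b T f -> a <= x <= b -> 0 < t -> Rbar_lt t T ->
  continuity_2d_pt (fun s y => f (clamp a b y) s) t x.
Proof.
  intros Hf Hx H0 HT. apply continuity_2d_pt_filterlim.
  assert (Hab : a <= b) by lra.
  apply (cyl_comp a b T f (fun z : R * R => clamp a b (snd z)) (fun z => fst z) (t, x) Hf).
  - simpl. rewrite clamp_id; auto. split; auto.
  - apply (continuous_comp snd (clamp a b)). apply continuous_snd. apply clamp_cont; auto.
  - apply continuous_fst.
  - destruct (tnbhd T t H0 HT) as [d Hd]. exists d. intros [s y] [Hs Hy]. simpl.
    split; [apply clamp_in; auto|]. apply Hd. exact Hs.
Qed.

Lemma in_between (T : Rbar) t s z : 0 < t -> Rbar_lt t T -> 0 < s -> Rbar_lt s T ->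
  Rmin t s <= z <= Rmax t s -> 0 < z /\ Rbar_lt z T.
Proof.
  intros. destruct T as [T'| |]; simpl in *; unfold Rmin, Rmax in *; destruct Rle_dec; try lra; tauto.
Qed.

Lemma deriv_int a b T (w wt : R -> R -> R) t :
  a < b -> (forall x s, a < x < b -> 0 < s -> Rbar_lt s T -> is_derive (fun s => w x s) s (wt x s)) ->
  cont_on_cyl a b T w -> cont_on_cyl a b T wt -> 0 < t -> Rbar_lt t T ->
  is_derive (fun s => RInt (fun x => w x s) a b) t (RInt (fun x => wt x t) a b).
Proof.
  intros Hab Hd Hw Hwt H0 HT.
  set (ha := fun s => RInt (fun z => wt a z) t s).
  set (hb := fun s => RInt (fun z => wt b z) t s).
  set (g := fun s x => if Rlt_dec a x then if Rlt_dec x b then w x s else hb s else ha s).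
  assert (Hh : forall c s, a <= c <= b -> 0 < s -> Rbar_lt s T ->
     is_derive (fun s => RInt (fun z => wt c z) t s) s (wt c s)).
  { intros c s Hc Hs HsT.
    apply is_derive_RInt with (a := t).
    2: apply cont_t with a b T; auto.
    destruct (tnbhd T s Hs HsT) as [d Hdd]. apply (loc_of s _ d). intros s' Hs'.
    destruct (Hdd s' Hs') as [Hs1 Hs2].
    apply RInt_correct. apply ex_RInt_continuous. intros z Hz.
    destruct (in_between T t s' z H0 HT Hs1 Hs2 Hz).
    apply cont_t with a b T; auto. }
  assert (Hg : forall s y, 0 < s -> Rbar_lt s T -> is_derive (fun z => g z y) s (wt (clamp a b y) s)).
  { intros s y Hs HsT. unfold g. destruct (Rlt_dec a y); destruct (Rlt_dec y b).
    - rewrite clamp_id by lra. apply Hd; auto.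
    - replace (clamp a b y) with b by (unfold clamp, Rmax, Rmin; repeat destruct Rle_dec; lra).
      apply Hh; auto; lra.
    - replace (clamp a b y) with a by (unfold clamp, Rmax, Rmin; repeat destruct Rle_dec; lra).
      apply Hh; auto; lra.
    - replace (clamp a b y) with a by (unfold clamp, Rmax, Rmin; repeat destruct Rle_dec; lra).
      apply Hh; auto; lra. }
  assert (Hgi : forall s x, a < x < b -> g s x = w x s).
  { intros s x Hx. unfold g. destruct (Rlt_dec a x); destruct (Rlt_dec x b); lra. }
  assert (HP := is_derive_RInt_param g a b t).
  rewrite Rmin_left, Rmax_right in HP by lra.
  destruct (tnbhd T t H0 HT) as [d Hdd].
  assert (HD : is_derive (fun s => RInt (fun x => g s x) a b) t (RInt (fun x => Derive (fun u => g u x) t) a b)).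
  { apply HP.
    - apply (loc_of t _ d). intros s Hs y Hy. destruct (Hdd s Hs).
      eexists. apply Hg; auto.
    - intros y Hy eps. destruct (cont_2d a b T wt y t Hwt Hy H0 HT eps) as [d1 Hd1].
      exists (mkposreal _ (Rmin_pos d1 d (cond_pos d1) (cond_pos d))). simpl. intros u v Hu Hv.
      destruct (Hdd u) as [Hu1 Hu2]. generalize (Rmin_r d1 d); lra.
      assert (E1 : Derive (fun z : R => g z v) u = wt (clamp a b v) u) by exact (is_derive_unique _ _ _ (Hg u v Hu1 Hu2)).
      assert (E2 : Derive (fun z : R => g z y) t = wt (clamp a b y) t) by exact (is_derive_unique _ _ _ (Hg t y H0 HT)).
      rewrite E1, E2.
      apply Hd1. generalize (Rmin_l d1 d); lra. generalize (Rmin_l d1 d); lra.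
    - apply (loc_of t _ d). intros s Hs. destruct (Hdd s Hs).
      apply ex_RInt_ext with (fun x => w (clamp a b x) s).
      { rewrite Rmin_left, Rmax_right by lra. intros x Hx. rewrite Hgi by auto. rewrite clamp_id; lra. }
      apply (ex_RInt_continuous (V:=R_CompleteNormedModule)). intros z _. apply cont_x with T; auto; lra. }
  apply is_derive_ext with (f := fun s => RInt (fun x => g s x) a b).
  { intros s. apply RInt_ext. rewrite Rmin_left, Rmax_right by lra. intros; apply Hgi; auto. }
  replace (RInt (fun x => wt x t) a b) with (RInt (fun x => Derive (fun u => g u x) t) a b). exact HD.
  apply RInt_ext. rewrite Rmin_left, Rmax_right by lra. intros x Hx.
  assert (E2 : Derive (fun z : R => g z x) t = wt (clamp a b x) t) by exact (is_derive_unique _ _ _ (Hg t x H0 HT)).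
  rewrite E2, clamp_id; lra.
Qed.

Lemma dminus (f g : R -> R) x df dg : is_derive f x df -> is_derive g x dg -> is_derive (fun y => f y - g y) x (df - dg).
Proof. intros; apply (is_derive_minus f g); auto. Qed.

Lemma ftc_open a b (H f : R -> R) : a < b ->
  (forall x, continuous (fun y => H (clamp a b y)) x) -> (forall x, continuous f x) ->
  (forall x, a < x < b -> is_derive H x (f x)) -> RInt f a b = H b - H a.
Proof.
  intros Hab HH Hf HD.
  set (I := fun x => RInt f a x).
  assert (HI : forall x, is_derive I x (f x)).
  { intros x. apply is_derive_RInt with a; auto. apply filter_forall. intros z.
    apply RInt_correct. apply (ex_RInt_continuous (V:=R_CompleteNormedModule)). intros; auto. }
  destruct (MVT_gen (fun x => I x - H (clamp a b x)) a b (fun _ => 0)) as [c [_ Hc]].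
  - rewrite Rmin_left, Rmax_right by lra. intros x Hx.
    replace 0 with (f x - f x) by ring. apply dminus. apply HI.
    apply is_derive_ext_loc with H. 2: apply HD; auto.
    assert (Hp : 0 < Rmin (x - a) (b - x)) by (apply Rmin_pos; lra).
    apply (loc_of x _ (mkposreal _ Hp)). simpl. intros y Hy. apply Rabs_def2 in Hy.
    generalize (Rmin_l (x-a) (b-x)) (Rmin_r (x-a) (b-x)); intros.
    rewrite clamp_id; auto; lra.
  - intros x _. apply continuity_pt_filterlim. apply (cminus I (fun y => H (clamp a b y))); auto.
    apply (ex_derive_continuous (K:=R_AbsRing) (V:=R_NormedModule) I x). eexists; apply HI.
  - simpl in Hc. rewrite !clamp_id in Hc by lra.
    unfold I in Hc. rewrite RInt_point in Hc. unfold zero in Hc; simpl in Hc; unfold I; lra.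
Qed.

Lemma rpow_pos x p : 0 < Rpower x p.
Proof. unfold Rpower; apply exp_pos. Qed.

Lemma RInt_clamp a b (F : R -> R) : a < b -> RInt (fun x => F (clamp a b x)) a b = RInt F a b.
Proof. intros. apply RInt_ext. rewrite Rmin_left, Rmax_right by lra. intros; rewrite clamp_id; auto; lra. Qed.

Lemma exRInt_c a b (F : R -> R) : (forall x, continuous F x) -> ex_RInt F a b.
Proof. intros; apply (ex_RInt_continuous (V:=R_CompleteNormedModule)); auto. Qed.

Ltac cont_step :=
  match goal with
  | |- continuous (fun _ => ?c) _ => apply cconst
  | |- continuous (fun y => _ + _) _ => apply cplus
  | |- continuous (fun y => _ - _) _ => apply cminus
  | |- continuous (fun y => _ / _) _ => apply cdiv
  | |- continuous (fun y => _ * _) _ => apply cmult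
  | |- continuous (fun y => _ ^ _) _ => apply cpow
  | |- continuous (fun y => Rpower _ _) _ => apply crpow
  end.
Ltac cont_tac := repeat cont_step.

Lemma flux_int a b T eps alpha n D chi sgn (w w1 w2 w3 w4 wt z z1 z2 z3 z4 zt : R -> R -> R) (kin : R -> R) t :
  a < b -> 0 < eps -> C41 a b T w w1 w2 w3 w4 wt -> C41 a b T z z1 z2 z3 z4 zt ->
  (forall x, a <= x <= b -> 0 < w x t) ->
  w1 a t = 0 -> w1 b t = 0 -> w3 a t = 0 -> w3 b t = 0 -> z1 a t = 0 -> z1 b t = 0 ->
  (forall x, a < x < b -> wt x t = rhs eps alpha n D chi sgn w w1 w2 w3 z1 kin x t) ->
  (forall x, continuous (fun y => kin (clamp a b y)) x) ->
  0 < t -> Rbar_lt t T ->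
  RInt (fun x => wt x t) a b = RInt (fun x => 3 * w x t ^ 3 / (3 * w x t ^ 2 + eps) * kin x) a b.
Proof.
  intros Hab Heps [Hwd [Cw [Cw1 [Cw2 [Cw3 [Cw4 Cwt]]]]]] [Hzd [Cz [Cz1 [Cz2 [Cz3 [Cz4 Czt]]]]]]
    Hpos Hw1a Hw1b Hw3a Hw3b Hz1a Hz1b Hrhs Hkin H0 HT.
  set (K := fun y => 3 * w y t ^ 3 / (3 * w y t ^ 2 + eps) * kin y).
  set (F1 := fun y => w y t ^ 4 / (Rpower (w y t) (4 - n) + eps) * w3 y t).
  set (F2 := fun y => Rpower (w y t) (- alpha) * w1 y t).
  set (F3 := fun y => Rpower (w y t) (5 - n) / (Rpower (w y t) (4 - n) + eps) * z1 y t).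
  set (H := fun y => - eps * F1 y + Rpower eps (alpha / 2) * F2 y + D * w1 y t + sgn * chi * F3 y).
  assert (Hle : a <= b) by lra.
  assert (Pc : forall y, 0 < w (clamp a b y) t) by (intros; apply Hpos; apply clamp_in; auto).
  assert (Kc : forall x, continuous (fun y => K (clamp a b y)) x).
  { intros x. unfold K. cont_tac; try apply Hkin; try apply (cont_x a b T); auto.
    generalize (Pc x); nra. }
  assert (Ic : forall x, continuous (fun y => wt (clamp a b y) t - K (clamp a b y)) x).
  { intros x. apply (cminus (fun y => wt (clamp a b y) t)); auto. apply (cont_x a b T); auto. }
  assert (E : RInt (fun y => wt (clamp a b y) t - K (clamp a b y)) a b = H b - H a).
  { apply ftc_open; auto.
    - intros x. unfold H, F1, F2, F3. cont_tac; try apply (cont_x a b T); auto;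
      generalize (rpow_pos (w (clamp a b x) t) (4 - n)); lra.
    - intros x Hx. rewrite clamp_id by lra. rewrite Hrhs by auto. unfold rhs.
      assert (Ew : forall y, a < y < b -> ex_derive (fun y0 => w y0 t) y).
      { intros y Hy. exists (w1 y t). apply (Hwd y t Hy H0 HT). }
      assert (dF1 : ex_derive F1 x).
      { unfold F1. apply ex_derive_mult. apply ex_derive_div. apply ex_derive_pow; auto.
        apply exdplus. apply exd_rpow; auto. apply Hpos; lra. apply ex_derive_const.
        generalize (rpow_pos (w x t) (4 - n)); lra.
        exists (w4 x t). apply (Hwd x t Hx H0 HT). }
      assert (dF2 : ex_derive F2 x).
      { unfold F2. apply ex_derive_mult. apply exd_rpow; auto. apply Hpos; lra.
        exists (w2 x t). apply (Hwd x t Hx H0 HT). }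
      assert (dF3 : ex_derive F3 x).
      { unfold F3. apply ex_derive_mult. apply ex_derive_div. apply exd_rpow; auto. apply Hpos; lra.
        apply exdplus. apply exd_rpow; auto. apply Hpos; lra. apply ex_derive_const.
        generalize (rpow_pos (w x t) (4 - n)); lra.
        exists (z2 x t). apply (Hzd x t Hx H0 HT). }
      replace (_ - K x) with (- eps * Derive F1 x + Rpower eps (alpha / 2) * Derive F2 x + D * w2 x t
          + sgn * chi * Derive F3 x) by (unfold K, F1, F2, F3; ring).
      unfold H. apply dplus; [apply dplus; [apply dplus|]|]; apply is_derive_scal;
        try apply Derive_correct; auto. apply (Hwd x t Hx H0 HT). }
  assert (H0a : H a = 0) by (unfold H, F1, F2, F3; rewrite Hw1a, Hw3a, Hz1a; ring).
  assert (H0b : H b = 0) by (unfold H, F1, F2, F3; rewrite Hw1b, Hw3b, Hz1b; ring).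
  rewrite H0a, H0b in E.
  assert (X1 : ex_RInt (fun y => wt (clamp a b y) t) a b) by (apply exRInt_c; intros; apply (cont_x a b T); auto).
  assert (X2 : ex_RInt (fun y => K (clamp a b y)) a b) by (apply exRInt_c; auto).
  assert (E2 : RInt (fun y => wt (clamp a b y) t - K (clamp a b y)) a b = RInt (fun y => wt (clamp a b y) t) a b - RInt (fun y => K (clamp a b y)) a b) by exact (RInt_minus (V:=R_CompleteNormedModule) _ _ a b X1 X2).
  rewrite E2 in E.
  rewrite <- (RInt_clamp a b (fun x => wt x t)) by auto.
  rewrite <- (RInt_clamp a b K) by auto.
  lra.
Qed.

Lemma kin_bound w eps : 0 < w -> 0 < eps ->
  3 * w ^ 3 / (3 * w ^ 2 + eps) <= w /\ w - sqrt eps / (2 * sqrt 3) <= 3 * w ^ 3 / (3 * w ^ 2 + eps).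
Proof.
  intros Hw He.
  set (s := sqrt eps). set (r := sqrt 3).
  assert (Hs : s * s = eps) by (apply sqrt_sqrt; lra).
  assert (Hr : r * r = 3) by (apply sqrt_sqrt; lra).
  assert (Hs0 : 0 < s) by (apply sqrt_lt_R0; lra).
  assert (Hr0 : 0 < r) by (apply sqrt_lt_R0; lra).
  assert (HD : 0 < 3 * w ^ 2 + eps) by nra.
  assert (E : 3 * w ^ 3 / (3 * w ^ 2 + eps) = w - eps * w / (3 * w ^ 2 + eps)) by (field; lra).
  rewrite E.
  assert (N : 0 <= eps * w / (3 * w ^ 2 + eps)) by (apply Rmult_le_pos; [nra | left; apply Rinv_0_lt_compat; lra]).
  assert (E2 : eps * w / (3 * w ^ 2 + eps) = s / (2 * r) - s * (r * w - s) ^ 2 / (2 * r * (3 * w ^ 2 + eps))).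
  { replace (3 * w ^ 2 + eps) with (r * r * w ^ 2 + s * s) by (rewrite Hr, Hs; ring).
    rewrite <- Hs. field. split; [nra | lra]. }
  assert (N2 : 0 <= s * (r * w - s) ^ 2 / (2 * r * (3 * w ^ 2 + eps))).
  { apply Rmult_le_pos. apply Rmult_le_pos; [lra | apply pow2_ge_0].
    left; apply Rinv_0_lt_compat. nra. }
  split; lra.
Qed.

Lemma ineq_u p u v l1 a1 c : 0 < u -> 0 < v -> 0 < l1 -> 0 < a1 -> p <= u -> u - c <= p ->
  p * (l1 - u + a1 * v) <= (l1 + c) * u - u ^ 2 + a1 * (u * v).
Proof. intros. assert (0 <= (u-p)*(l1+a1*v)) by (apply Rmult_le_pos; nra).
  assert (0 <= (p-(u-c))*u) by (apply Rmult_le_pos; lra). nra. Qed.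

Lemma ineq_v p u v l2 a2 c : 0 < u -> 0 < v -> 0 < l2 -> 0 < a2 -> p <= v -> v - c <= p ->
  p * (l2 - v - a2 * u) <= (l2 + c) * v - v ^ 2 - a2 * (u * v) + a2 * c * u.
Proof. intros. assert (0 <= (v-p)*l2) by (apply Rmult_le_pos; lra).
  assert (0 <= (p-(v-c))*v) by (apply Rmult_le_pos; lra).
  assert (0 <= (p-(v-c))*(a2*u)) by (apply Rmult_le_pos; nra). nra. Qed.

Lemma exR a b (F : R -> R) : a < b -> (forall x, continuous (fun y => F (clamp a b y)) x) -> ex_RInt F a b.
Proof. intros. apply ex_RInt_ext with (fun y => F (clamp a b y)).
  rewrite Rmin_left, Rmax_right by lra. intros; rewrite clamp_id; auto; lra.
  apply exRInt_c; auto. Qed.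

Lemma lin3 a b (f g h : R -> R) k1 k3 : ex_RInt f a b -> ex_RInt g a b -> ex_RInt h a b ->
  RInt (fun x => k1 * f x - g x + k3 * h x) a b = k1 * RInt f a b - RInt g a b + k3 * RInt h a b.
Proof.
  intros Xf Xg Xh. apply is_RInt_unique.
  exact (is_RInt_plus (V:=R_NormedModule) (fun x => k1 * f x - g x) (fun x => k3 * h x) a b _ _
    (is_RInt_minus (V:=R_NormedModule) (fun x => k1 * f x) g a b _ _
       (is_RInt_scal (V:=R_NormedModule) f a b k1 _ (RInt_correct _ _ _ Xf)) (RInt_correct _ _ _ Xg))
    (is_RInt_scal (V:=R_NormedModule) h a b k3 _ (RInt_correct _ _ _ Xh))).
Qed.

Lemma lin4 a b (f g h i : R -> R) k1 k3 k4 : ex_RInt f a b -> ex_RInt g a b -> ex_RInt h a b -> ex_RInt i a b ->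
  RInt (fun x => k1 * f x - g x - k3 * h x + k4 * i x) a b = k1 * RInt f a b - RInt g a b - k3 * RInt h a b + k4 * RInt i a b.
Proof.
  intros Xf Xg Xh Xi. apply is_RInt_unique.
  exact (is_RInt_plus (V:=R_NormedModule) (fun x => k1 * f x - g x - k3 * h x) (fun x => k4 * i x) a b _ _
   (is_RInt_minus (V:=R_NormedModule) (fun x => k1 * f x - g x) (fun x => k3 * h x) a b _ _
    (is_RInt_minus (V:=R_NormedModule) (fun x => k1 * f x) g a b _ _
       (is_RInt_scal (V:=R_NormedModule) f a b k1 _ (RInt_correct _ _ _ Xf)) (RInt_correct _ _ _ Xg))
    (is_RInt_scal (V:=R_NormedModule) h a b k3 _ (RInt_correct _ _ _ Xh)))
    (is_RInt_scal (V:=R_NormedModule) i a b k4 _ (RInt_correct _ _ _ Xi))).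
Qed.
Theorem lemma2p2
  (a b : R) (D1 D2 a1 a2 l1 l2 chi1 chi2 alpha n1 n2 eps : R) (T : Rbar)
  (u u1 u2 u3 u4 ut v v1 v2 v3 v4 vt : R -> R -> R) :
  a < b ->
  0 < D1 -> 0 < D2 -> 0 < a1 -> 0 < a2 -> 0 < l1 -> 0 < l2 -> 0 < chi1 -> 0 < chi2 ->
  0 < alpha <= 1 / 2 ->
  0 < n1 < 4 -> 0 < n2 < 4 ->
  0 < eps < 1 ->
  Rbar_lt (Finite 0) T ->
  C41 a b T u u1 u2 u3 u4 ut ->
  C41 a b T v v1 v2 v3 v4 vt ->
  (forall x t, cyl a b T x t -> 0 < u x t /\ 0 < v x t) ->
  (forall t, 0 < t -> Rbar_lt (Finite t) T ->
     u1 a t = 0 /\ u1 b t = 0 /\ u3 a t = 0 /\ u3 b t = 0 /\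
     v1 a t = 0 /\ v1 b t = 0 /\ v3 a t = 0 /\ v3 b t = 0) ->
  (forall x t, a < x < b -> 0 < t -> Rbar_lt (Finite t) T ->
     ut x t = rhs eps alpha n1 D1 chi1 (-1) u u1 u2 u3 v1
                  (fun y => l1 - u y t + a1 * v y t) x t /\
     vt x t = rhs eps alpha n2 D2 chi2 1 v v1 v2 v3 u1
                  (fun y => l2 - v y t - a2 * u y t) x t) ->
  forall t, 0 < t -> Rbar_lt (Finite t) T ->
    (exists dU, is_derive (fun s => RInt (fun x => u x s) a b) t dU /\
       dU <= (l1 + sqrt eps / (2 * sqrt 3)) * RInt (fun x => u x t) a b
             - RInt (fun x => u x t ^ 2) a b
             + a1 * RInt (fun x => u x t * v x t) a b) /\
    (exists dV, is_derive (fun s => RInt (fun x => v x s) a b) t dV /\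
       dV <= (l2 + sqrt eps / (2 * sqrt 3)) * RInt (fun x => v x t) a b
             - RInt (fun x => v x t ^ 2) a b
             - a2 * RInt (fun x => u x t * v x t) a b
             + a2 * sqrt eps / (2 * sqrt 3) * RInt (fun x => u x t) a b).
Proof.
  intros Hab HD1 HD2 Ha1 Ha2 Hl1 Hl2 Hc1 Hc2 Hal Hn1 Hn2 Heps HT0 Cu Cv Hpos Hbd Heq t Ht HtT.
  destruct (Hbd t Ht HtT) as [u1a [u1b [u3a [u3b [v1a [v1b [v3a v3b]]]]]]].
  assert (He : 0 < eps) by lra.
  assert (Hle : a <= b) by lra.
  assert (Pu : forall x, a <= x <= b -> 0 < u x t) by (intros x Hx; apply (Hpos x t); split; auto).
  assert (Pv : forall x, a <= x <= b -> 0 < v x t) by (intros x Hx; apply (Hpos x t); split; auto).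
  pose proof Cu as [Hud [Cu0 [_ [_ [_ [_ Cut]]]]]].
  pose proof Cv as [Hvd [Cv0 [_ [_ [_ [_ Cvt]]]]]].
  assert (Cux : forall x, continuous (fun y => u (clamp a b y) t) x) by (intros; apply (cont_x a b T); auto).
  assert (Cvx : forall x, continuous (fun y => v (clamp a b y) t) x) by (intros; apply (cont_x a b T); auto).
  assert (Pux : forall y, 0 < u (clamp a b y) t) by (intros; apply Pu; apply clamp_in; auto).
  assert (Pvx : forall y, 0 < v (clamp a b y) t) by (intros; apply Pv; apply clamp_in; auto).
  assert (Xu : ex_RInt (fun x => u x t) a b) by (apply exR; auto).
  assert (Xv : ex_RInt (fun x => v x t) a b) by (apply exR; auto).
  assert (Xu2 : ex_RInt (fun x => u x t ^ 2) a b) by (apply exR; auto; intros; cont_tac; auto).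
  assert (Xv2 : ex_RInt (fun x => v x t ^ 2) a b) by (apply exR; auto; intros; cont_tac; auto).
  assert (Xuv : ex_RInt (fun x => u x t * v x t) a b) by (apply exR; auto; intros; cont_tac; auto).
  split.
  - exists (RInt (fun x => ut x t) a b). split.
    + apply deriv_int with T; auto. intros x s Hx Hs HsT. apply (Hud x s Hx Hs HsT).
    + rewrite (flux_int a b T eps alpha n1 D1 chi1 (-1) u u1 u2 u3 u4 ut v v1 v2 v3 v4 vt
                 (fun y => l1 - u y t + a1 * v y t) t); auto.
      2: intros x Hx; apply (Heq x t Hx Ht HtT).
      2: intros x; cbv beta; cont_tac; auto.
      eapply Rle_trans.
      apply RInt_le with (g := fun x => (l1 + sqrt eps / (2 * sqrt 3)) * u x t - u x t ^ 2 + a1 * (u x t * v x t)).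
      lra.
      apply exR; auto. intros x; cont_tac; auto. generalize (Pux x); nra.
      apply exR; auto. intros x; cont_tac; auto.
      intros x Hx. destruct (kin_bound (u x t) eps) as [K1 K2]; auto. apply Pu; lra.
      apply ineq_u; auto; apply Pu || apply Pv; lra.
      right. rewrite (lin3 a b (fun x => u x t) (fun x => u x t ^ 2) (fun x => u x t * v x t)); auto.
  - exists (RInt (fun x => vt x t) a b). split.
    + apply deriv_int with T; auto. intros x s Hx Hs HsT. apply (Hvd x s Hx Hs HsT).
    + rewrite (flux_int a b T eps alpha n2 D2 chi2 1 v v1 v2 v3 v4 vt u u1 u2 u3 u4 ut
                 (fun y => l2 - v y t - a2 * u y t) t); auto.
      2: intros x Hx; apply (Heq x t Hx Ht HtT).
      2: intros x; cbv beta; cont_tac; auto.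
      eapply Rle_trans.
      apply RInt_le with (g := fun x => (l2 + sqrt eps / (2 * sqrt 3)) * v x t - v x t ^ 2
                                     - a2 * (u x t * v x t) + a2 * sqrt eps / (2 * sqrt 3) * u x t).
      lra.
      apply exR; auto. intros x; cont_tac; auto. generalize (Pvx x); nra.
      apply exR; auto. intros x; cont_tac; auto.
      intros x Hx. destruct (kin_bound (v x t) eps) as [K1 K2]; auto. apply Pv; lra.
      replace (a2 * sqrt eps / (2 * sqrt 3) * u x t) with (a2 * (sqrt eps / (2 * sqrt 3)) * u x t) by (field; 
        apply Rgt_not_eq; apply sqrt_lt_R0; lra).
      apply ineq_v; auto; apply Pu || apply Pv; lra.
      right. rewrite (lin4 a b (fun x => v x t) (fun x => v x t ^ 2) (fun x => u x t * v x t) (fun x => u x t)); auto.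
Qed.
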